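(* Let $n\ge 1$ and let $p$ be any probability distribution on $\{0,1\}^n$ with support $\operatorname{supp}(p)=\{v: p(v)>0\}$. Let $k$ be the minimal number of pairs $\{u,u'\}\subseteq\{0,1\}^n$, where in each pair the vectors $u,u'$ differ in exactly one entry, such that $\operatorname{supp}(p)$ is contained in the union of these pairs. Then $p$ can be approximated arbitrarily well by the visible marginal distribution of an RBM with $n$ visible units and $k-1$ hidden units; that is, for every $\varepsilon>0$ there exist parameters $W,B,C$ of such an RBM whose visible marginal $q$ satisfies $D(p\,\|\,q)<\varepsilon$.
   Context: A Restricted Boltzmann Machine (RBM) with $n$ visible units and $m$ hidden units has parameters $W\in\mathbb{R}^{m\times n}$, $B\in\mathbb{R}^n$, $C\in\mathbb{R}^m$, and defines the joint distribution $p(v,h)=\frac{1}{Z}\exp(h^T W v + B\cdot v + C\cdot h)$ on $(v,h)\in\{0,1\}^n\times\{0,1\}^m$, where $Z$ is the normalizing constant; its visible marginal distribution is $q(v)=\sum_{h\in\{0,1\}^m}p(v,h)$. For $m=0$ this is $q(v)\propto\exp(B\cdot v)$. $D(p\|q)=\sum_v p(v)\log\frac{p(v)}{q(v)}$ denotes the Kullback–Leibler divergence. *)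

(* Defs.v *)
From HB Require Import structures.
From mathcomp Require Import all_boot all_order all_algebra.
From mathcomp Require Import reals.
From mathcomp Require Import sequences exp.
Set Implicit Arguments. Unset Strict Implicit. Unset Printing Implicit Defensive.
Import Order.TTheory GRing.Theory Num.Theory.
Local Open Scope ring_scope.

Definition state (n : nat) := {ffun 'I_n -> bool}.

Definition b2R {R : realType} (b : bool) : R := (b : nat)%:R.

Section RBM.
Variables (R : realType) (n m : nat).

Definition rbm_energy (W : 'M[R]_(m, n)) (B : 'rV[R]_n) (C : 'rV[R]_m)
  (v : state n) (h : state m) : R :=
  \sum_(i < m) \sum_(j < n) b2R (h i) * W i j * b2R (v j)
  + \sum_(j < n) B 0 j * b2R (v j) + \sum_(i < m) C 0 i * b2R (h i).

Definition rbm_Z W B C : R :=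
  \sum_(v : state n) \sum_(h : state m) expR (rbm_energy W B C v h).

Definition rbm_marginal W B C (v : state n) : R :=
  (\sum_(h : state m) expR (rbm_energy W B C v h)) / rbm_Z W B C.

End RBM.

Definition is_distribution {R : realType} {T : finType} (p : T -> R) : Prop :=
  (forall x, 0 <= p x) /\ \sum_x p x = 1.

Definition KL {R : realType} {T : finType} (p q : T -> R) : R :=
  \sum_(x | 0 < p x) p x * ln (p x / q x).

Definition adjacent (n : nat) (u u' : state n) : bool :=
  #|[set i | u i != u' i]| == 1%N.

Definition edge_cover {R : realType} (n : nat) (p : state n -> R) (k : nat) : Prop :=
  exists s : seq (state n * state n),
    [/\ size s = k,
        all (fun e => adjacent e.1 e.2) s &
        forall v, 0 < p v -> exists2 e, e \in s & (v == e.1) || (v == e.2)].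

(* Main.v *)
Require Import Defs.
From HB Require Import structures.
From mathcomp Require Import all_boot all_order all_algebra.
From mathcomp Require Import reals.
From mathcomp Require Import sequences exp.
From mathcomp Require Import ring lra.
Import Order.TTheory GRing.Theory Num.Theory.
Local Open Scope ring_scope.
Set Implicit Arguments. Unset Strict Implicit.

Definition aff (R : realType) n (phi : 'I_n -> bool -> R) (v : state n) : R :=
  \sum_(j < n) phi j (v j).

Definition reprF (R : realType) n m (f : state n -> R) : Prop :=
  exists (phi0 : 'I_n -> bool -> R) (phi : 'I_m -> 'I_n -> bool -> R),
  forall v, f v = expR (aff phi0 v) * \prod_(i < m) (1 + expR (aff (phi i) v)).

Lemma b2R_aff (R : realType) (x y : R) (b : bool) :
  (if b then y else x) = x + (y - x) * b2R b.
Proof. by case: b; rewrite /b2R /= ?mulr1 ?mulr0 ?addr0 // addrC subrK. Qed.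

Lemma repr_pos (R : realType) n m (f : state n -> R) : reprF m f -> forall v, 0 < f v.
Proof.
case=> phi0 [phi Hf] v; rewrite Hf mulr_gt0 ?expR_gt0 //.
apply: prodr_gt0 => i _; by rewrite ltr_wpDr ?expR_ge0.
Qed.

Lemma sum_h (R : realType) m (A : 'I_m -> R) :
  \sum_(h : state m) \prod_(i < m) expR (b2R (h i) * A i) = \prod_(i < m) (1 + expR (A i)).
Proof.
rewrite -(bigA_distr_bigA (fun i (b : bool) => expR (b2R b * A i))) /=.
apply: eq_bigr => i _; rewrite big_bool /b2R /= mul1r mul0r expR0 addrC.
by [].
Qed.

Lemma repr_rbm (R : realType) n m (g : state n -> R) : reprF m g ->
  exists (W : 'M[R]_(m, n)) (B : 'rV[R]_n) (C : 'rV[R]_m),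
  forall v, rbm_marginal W B C v = g v / \sum_u g u.
Proof.
case=> phi0 [phi Hg].
pose W := \matrix_(i < m, j < n) (phi i j true - phi i j false).
pose B := \row_(j < n) (phi0 j true - phi0 j false).
pose C := \row_(i < m) \sum_(j < n) phi i j false.
pose kap := \sum_(j < n) phi0 j false.
have affE : forall (psi : 'I_n -> bool -> R) v,
    aff psi v = \sum_j psi j false + \sum_j (psi j true - psi j false) * b2R (v j).
  by move=> psi v; rewrite /aff -big_split /=; apply: eq_bigr => j _; rewrite -b2R_aff; by case: (v j).
have key : forall v, \sum_(h : state m) expR (rbm_energy W B C v h) = expR (- kap) * g v.
  move=> v; rewrite Hg mulrA -expRD.
  have -> : - kap + aff phi0 v = \sum_j B 0 j * b2R (v j).
    by rewrite affE addrA addNr add0r; apply: eq_bigr => j _; rewrite mxE.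
  rewrite -sum_h mulr_sumr; apply: eq_bigr => h _.
  rewrite /rbm_energy expRD -expR_sum.
  rewrite -!expRD; congr expR.
  rewrite [X in X + _ = _]addrC -addrA; congr (_ + _).
  rewrite -big_split /=; apply: eq_bigr => i _.
  rewrite affE mulrDr mxE addrC; congr (_ + _); first by rewrite mulrC.
  rewrite mulr_sumr; apply: eq_bigr => j _; rewrite mxE; ring.
exists W, B, C => v.
rewrite /rbm_marginal /rbm_Z key.
under eq_bigr do rewrite key.
rewrite -mulr_sumr invfM mulrACA mulfV ?mul1r //.
by rewrite gt_eqF ?expR_gt0.
Qed.

Lemma adjP n (a b : state n) : Defs.adjacent a b ->
  exists c, a c != b c /\ forall j, j != c -> a j = b j.
Proof.
move/cards1P=> [c Hc]; exists c; split.
  have : c \in [set i | a i != b i] by rewrite Hc set11.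
  by rewrite inE.
move=> j jc; apply/eqP; apply: contraNT jc => Hj.
have : j \in [set i | a i != b i] by rewrite inE.
by rewrite Hc inE.
Qed.

Lemma edge_fun (R : realType) n (a b : state n) (al be S : R) :
  Defs.adjacent a b -> 0 <= S ->
  exists phi : 'I_n -> bool -> R,
    [/\ aff phi a = al, aff phi b = be &
        forall v, v != a -> v != b -> aff phi v <= Num.max al be - S].
Proof.
move=> /adjP [c [abc Hab]] S0.
exists (fun j x => if j == c then (if x == a c then al else be)
                   else (if x == a j then 0 else - S)).
split.
- rewrite /aff (bigD1 c) //= eqxx eqxx big1 ?addr0 // => j /negbTE ->.
  by rewrite eqxx.
- rewrite /aff (bigD1 c) //= eqxx eq_sym (negbTE abc) big1 ?addr0 // => j jc.
  by rewrite (negbTE jc) (Hab j jc) eqxx.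
move=> v va vb.
have [j /andP [jc vj]] : exists j, (j != c) && (v j != a j).
  apply/existsP; apply: contraNT va; rewrite negb_exists => /forallP Hv.
  apply/eqP/ffunP => i; have [->|ic] := eqVneq i c; last first.
    by have := Hv i; rewrite ic /= negbK => /eqP.
  case Hvc: (v c == a c); first by apply/eqP.
  exfalso; move/negP: vb; apply; apply/eqP/ffunP => k.
  have [->|kc] := eqVneq k c; last first.
    by have := Hv k; rewrite kc /= negbK => /eqP ->; rewrite Hab.
  by move: Hvc abc; case: (v c); case: (a c); case: (b c).
rewrite /aff (bigD1 c) //= eqxx (bigD1 j) //= (negbTE jc) (negbTE vj).
have H1 : (if v c == a c then al else be) <= Num.max al be.
  by case: ifP => _; rewrite ?le_max lexx ?orbT.
have H2 : \sum_(i < n | (i != c) && (i != j))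
   (if i == c then (if v i == a c then al else be) else (if v i == a i then 0 else - S)) <= 0.
  apply: sumr_le0 => i /andP [ic _]; rewrite (negbTE ic); case: ifP => // _.
  by rewrite oppr_le0.
by have := lerD H1 (lerD (lexx (- S)) H2); rewrite addr0.
Qed.

Lemma edge_fun2 (R : realType) n (a b : state n) (al be eta : R) :
  Defs.adjacent a b -> 0 < eta ->
  exists phi : 'I_n -> bool -> R,
    [/\ aff phi a = al, aff phi b = be &
        forall v, v != a -> v != b -> expR (aff phi v) <= eta].
Proof.
move=> ab eta0.
have H0 : 0 <= Num.max 0 (Num.max al be - ln eta) by rewrite le_max lexx.
have H1 : Num.max al be - ln eta <= Num.max 0 (Num.max al be - ln eta)
  by rewrite le_max lexx orbT.
have [phi [Ha Hb Hv]] := edge_fun al be ab H0.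
exists phi; split => // v va vb.
rewrite -(lnK eta0) ler_expR; apply: (le_trans (Hv v va vb)).
move: H1; set M := Num.max al be; set T := Num.max 0 _; lra.
Qed.

Lemma step (R : realType) n m (f : state n -> R) (a b : state n) (ta tb eta : R) :
  reprF m f -> Defs.adjacent a b -> 0 < ta -> 0 < tb -> 0 < eta ->
  exists g, [/\ reprF m.+1 g, g a = f a + ta, g b = f b + tb,
    forall v, f v <= g v & forall v, v != a -> v != b -> g v <= (1 + eta) * f v].
Proof.
move=> rf ab ta0 tb0 eta0.
have fpos := repr_pos rf.
have [psi [Ha Hb Hv]] := edge_fun2 (ln (ta / f a)) (ln (tb / f b)) ab eta0.
exists (fun v => f v * (1 + expR (aff psi v))); split.
- case: rf => phi0 [phi Hf].
  exists phi0, (fun i => match unlift ord0 i with Some i' => phi i' | None => psi end).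
  move=> v; rewrite big_ord_recl unlift_none Hf.
  under [X in _ = _ * (_ * X)]eq_bigr do rewrite liftK.
  by rewrite -mulrA [X in _ * X]mulrC.
- rewrite Ha lnK; last by rewrite posrE divr_gt0.
  by rewrite mulrDr mulr1 mulrCA mulfV ?mulr1 // gt_eqF.
- rewrite Hb lnK; last by rewrite posrE divr_gt0.
  by rewrite mulrDr mulr1 mulrCA mulfV ?mulr1 // gt_eqF.
- move=> v; rewrite ler_peMr ?(ltW (fpos v)) //.
  by rewrite lerDl expR_ge0.
- move=> v va vb; rewrite mulrC ler_pM2r // lerD2l; exact: Hv.
Qed.

Lemma base (R : realType) n (a b : state n) (ta tb eta : R) :
  Defs.adjacent a b -> 0 < ta -> 0 < tb -> 0 < eta ->
  exists g, [/\ reprF 0 g, g a = ta, g b = tb & forall v, v != a -> v != b -> g v <= eta].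
Proof.
move=> ab ta0 tb0 eta0.
have [psi [Ha Hb Hv]] := edge_fun2 (ln ta) (ln tb) ab eta0.
exists (fun v => expR (aff psi v)); split.
- by exists psi, (fun _ => psi) => v; rewrite big_ord0 mulr1.
- by rewrite Ha lnK.
- by rewrite Hb lnK.
- exact: Hv.
Qed.

Lemma le_sum_pt (R : realType) (T : finType) (p : T -> R) :
  (forall x, 0 <= p x) -> forall v, p v <= \sum_x p x.
Proof.
by move=> p0 v; rewrite (bigD1 v) //= lerDl sumr_ge0.
Qed.

Lemma sum_ite (R : realType) (T : finType) (a : T) (x : R) :
  \sum_v (if v == a then x else 0) = x.
Proof. by rewrite -big_mkcond /= big_pred1_eq. Qed.

Lemma sum_bound3 (R : realType) (T : finType) (g h : T -> R) a b (x y : R) :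
  (forall v, g v <= h v + (if v == a then x else 0) + (if v == b then y else 0)) ->
  \sum_v g v <= \sum_v h v + x + y.
Proof.
move=> H; apply: (le_trans (ler_sum _ (fun v _ => H v))).
by rewrite !big_split /= !sum_ite.
Qed.

Lemma sum_remove (R : realType) (T : finType) (p : T -> R) (a b : T) : a != b ->
  \sum_v p v = \sum_v (if (v == a) || (v == b) then 0 else p v) + p a + p b.
Proof.
move=> ab; rewrite -(sum_ite a (p a)) -(sum_ite b (p b)) -!big_split /=.
apply: eq_bigr => v _.
have [->|va] := eqVneq v a; first by rewrite (negbTE ab) /=; ring.
have [->|vb] := eqVneq v b; first by rewrite /=; ring.
by rewrite /=; ring.
Qed.

Lemma adj_neq n (a b : state n) : Defs.adjacent a b -> a != b.
Proof. by move/adjP=> [c [abc _]]; apply: contraNneq abc => ->. Qed.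

Lemma key_ineq (R : realType) (c : R) : 0 < c -> c < 1 ->
  c * (1 + (1 - c) / 8) ^+ 2 <= (1 + c) / 2.
Proof. move=> c0 c1; rewrite expr2; nra. Qed.

Lemma main_ind (R : realType) n (e : state n * state n) (s : seq (state n * state n)) :
  all (fun e => Defs.adjacent e.1 e.2) (e :: s) ->
  forall p : state n -> R, (forall v, 0 <= p v) ->
  (forall v, 0 < p v -> exists2 e', e' \in e :: s & (v == e'.1) || (v == e'.2)) ->
  forall c, 0 < c -> c < 1 ->
  exists g, reprF (size s) g /\
    forall v, 0 < p v -> c * p v * \sum_u g u <= g v * \sum_u p u.
Proof.
elim: s => [|[a b] s IH] Hall p p0 cov c c0 c1.
  move: Hall; case: e cov => a b cov /= /andP [ab _].
  set P := \sum_u p u.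
  have [Ple|Pgt] := leP P 0.
    have [g [rg _ _ _]] := base ab (@ltr01 R) (@ltr01 R) (@ltr01 R).
    exists g; split => // v pv; exfalso.
    by have := le_sum_pt p0 v; rewrite -/P; lra.
  pose th := (1 - c) * P / 4.
  have th0 : 0 < th by rewrite /th; apply: divr_gt0 => //; apply: mulr_gt0 => //; lra.
  pose N : R := #|{: state n}|%:R.
  have N0 : 0 < N by rewrite /N ltr0n; apply/card_gt0P; exists a.
  have [g [rg ga gb gv]] := base ab
     (ltr_wpDl (p0 a) th0) (ltr_wpDl (p0 b) th0) (divr_gt0 th0 N0).
  exists g; split => // v pv.
  have abn := adj_neq ab.
  have Sg : \sum_u g u <= P + 3 * th.
    have := @sum_bound3 R _ g (fun _ => th / N) a b (p a + th) (p b + th).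
    rewrite sumr_const.
    have -> : th / N *+ #|{: state n}| = th by rewrite -mulr_natr divfK ?gt_eqF.
    have := sum_remove p abn; rewrite -/P.
    have : 0 <= \sum_v (if (v == a) || (v == b) then 0 else p v).
      by apply: sumr_ge0 => u _; case: ifP.
    move=> H1 H2 H3.
    have : \sum_v g v <= th + (p a + th) + (p b + th).
      apply: H3 => u; have [->|ua] := eqVneq u a.
        by rewrite (negbTE abn) ga addr0 lerDr ltW // divr_gt0.
      have [->|ub] := eqVneq u b.
        by rewrite ?eqxx gb addr0 lerDr ltW // divr_gt0.
      by rewrite !addr0; apply: gv.
    lra.
  have gvp : p v <= g v.
    have [e' ] := cov v pv; rewrite inE => /eqP -> /orP [] /eqP -> /=.
      by rewrite ga lerDl ltW.
    by rewrite gb lerDl ltW.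
  have h2 : c * (P + 3 * th) <= P.
    have h1 : 0 < 1 - c by lra.
    have h3 : 0 < 4 - 3 * c by lra.
    have := mulr_gt0 Pgt (mulr_gt0 h1 h3); rewrite /th; nra.
  apply: (le_trans (ler_wpM2l (mulr_ge0 (ltW c0) (p0 v)) Sg)).
  rewrite -mulrA [p v * _]mulrC mulrA.
  apply: (le_trans (ler_wpM2r (p0 v) h2)).
  by rewrite mulrC ler_wpM2r // ltW.

move: Hall => /= /and3P [He ab Hs].
have abn := adj_neq ab.
pose p' := fun v => if (v == a) || (v == b) then 0 else p v.
have p'0 : forall v, 0 <= p' v by move=> v; rewrite /p'; case: ifP.
have cov' : forall v, 0 < p' v -> exists2 e', e' \in e :: s & (v == e'.1) || (v == e'.2).
  move=> v; rewrite /p'; case: ifP => vab pv; first by rewrite ltxx in pv.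
  have [e' He' Hv] := cov v pv.
  rewrite !inE in He'; case/or3P: He' => [/eqP Heq|/eqP Heq|Hin].
  - by exists e; [rewrite mem_head | rewrite -Heq].
  - by move: Hv vab; rewrite Heq /= => ->.
  - by exists e'; rewrite // inE Hin orbT.
have c0' : 0 < (1 + c) / 2 by lra.
have c1' : (1 + c) / 2 < 1 by lra.
have [f [rf Hf]] := IH (ltac:(by rewrite /= He Hs)) p' p'0 cov' _ c0' c1'.
have fpos := repr_pos rf.
set P := \sum_u p u.
set P' := \sum_u p' u.
have HP : P = P' + p a + p b by rewrite /P /P' (sum_remove p abn).
have P'0 : 0 <= P' by apply: sumr_ge0 => u _.
have [Ple|Pgt] := leP P 0.
  have [g [rg _ _ _ _]] := step rf ab (@ltr01 R) (@ltr01 R) (@ltr01 R).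
  exists g; split => // v pv; exfalso.
  by have := le_sum_pt p0 v; rewrite -/P; lra.
pose eta := (1 - c) / 8.
have eta0 : 0 < eta by rewrite /eta; lra.
pose th := eta * P / 3.
have th0 : 0 < th by rewrite /th; apply: divr_gt0 => //; apply: mulr_gt0.
set S := \sum_u f u.
have S0 : 0 < S by apply: (lt_le_trans (fpos a)); apply: le_sum_pt => u; exact: ltW.
have P'th : 0 < P' + th by lra.
pose K := S / (P' + th).
have K0 : 0 < K by apply: divr_gt0.
have SK : S = K * (P' + th) by rewrite /K divfK ?gt_eqF.
have ta0 : 0 < (p a + th) * K by apply: mulr_gt0 => //; have := p0 a; lra.
have tb0 : 0 < (p b + th) * K by apply: mulr_gt0 => //; have := p0 b; lra.
have [g [rg ga gb fg gv]] := step rf ab ta0 tb0 eta0.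
exists g; split => // v pv.
have Sg : \sum_u g u <= (1 + eta) * S + (p a + th) * K + (p b + th) * K.
  rewrite /S mulr_sumr; apply: (@sum_bound3 _ _ _ _ a b) => u.
  have [->|ua] := eqVneq u a.
    rewrite (negbTE abn) ga addr0 lerD2r ler_peMl ?ltW //; lra.
  have [->|ub] := eqVneq u b.
    rewrite ?eqxx gb addr0 lerD2r ler_peMl ?ltW //; lra.
  by rewrite !addr0; apply: gv.
have Sg2 : \sum_u g u <= K * ((1 + eta) ^+ 2 * P).
  apply: (le_trans Sg); rewrite SK.
  have -> : (1 + eta) ^+ 2 * P = (1 + eta) * (P + 3 * th).
    by rewrite /th; field.
  have H : (1 + eta) * (P' + th) + (p a + th) + (p b + th) <= (1 + eta) * (P + 3 * th).
    rewrite HP; have := p0 a; have := p0 b; nra.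
  have := ler_wpM2l (ltW K0) H; lra.
have gvK : (1 + c) / 2 * p v * K <= g v.
  have [->|va] := eqVneq v a.
    rewrite ga; have fa := fpos a; have pa0 := p0 a.
    have H : (1 + c) / 2 * p a * K <= p a * K.
      rewrite ler_pM2r // ler_piMl //; lra.
    have := mulr_gt0 th0 K0; nra.
  have [->|vb] := eqVneq v b.
    rewrite gb; have fb := fpos b; have pb0 := p0 b.
    have H : (1 + c) / 2 * p b * K <= p b * K.
      rewrite ler_pM2r // ler_piMl //; lra.
    have := mulr_gt0 th0 K0; nra.
  have pv' : 0 < p' v by rewrite /p' (negbTE va) (negbTE vb).
  have := Hf v pv'; rewrite -/S -/P' SK.
  have -> : p' v = p v by rewrite /p' (negbTE va) (negbTE vb).
  move=> H; apply: (le_trans _ (fg v)).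
  have Hle : f v * P' <= f v * (P' + th) by rewrite ler_pM2l //; lra.
  have H2 : (1 + c) / 2 * p v * K * (P' + th) <= f v * (P' + th).
    by apply: le_trans Hle; rewrite -mulrA.
  by rewrite -(ler_pM2r P'th).
have KI := key_ineq c0 c1.
apply: (le_trans (ler_wpM2l (mulr_ge0 (ltW c0) (p0 v)) Sg2)).
have -> : c * p v * (K * ((1 + eta) ^+ 2 * P)) = (c * (1 + eta) ^+ 2) * (p v * K * P) by ring.
have X0 : 0 <= p v * K * P.
  by apply: mulr_ge0; [apply: mulr_ge0 => //; exact: ltW | exact: ltW].
apply: (le_trans (ler_wpM2r X0 KI)).
have -> : (1 + c) / 2 * (p v * K * P) = ((1 + c) / 2 * p v * K) * P by ring.
by apply: ler_wpM2r => //; exact: ltW.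
Qed.

Theorem theorem1 (R : realType) (n : nat) (p : state n -> R) (k : nat) :
  (1 <= n)%N ->
  is_distribution p ->
  edge_cover p k ->
  (forall k', edge_cover p k' -> (k <= k')%N) ->
  forall eps : R, 0 < eps ->
  exists (W : 'M[R]_(k.-1, n)) (B : 'rV[R]_n) (C : 'rV[R]_(k.-1)),
    KL p (rbm_marginal W B C) < eps.
Proof.
move=> _ [p0 p1] [s [sz Hall cov]] _ eps eps0.
have [v0 pv0] : exists v, 0 < p v.
  case: (boolP [exists v, 0 < p v]) => [/existsP //|].
  rewrite negb_exists => /forallP H; exfalso.
  have : \sum_v p v <= 0 by apply: sumr_le0 => v _; rewrite leNgt; exact: H.
  by rewrite p1; lra.
case: s sz Hall cov => [|e s] sz Hall cov.
  by have [e'] := cov v0 pv0; rewrite in_nil.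
subst k.
pose c : R := expR (- (eps / 2)).
have c0 : 0 < c by apply: expR_gt0.
have c1 : c < 1 by rewrite /c expR_lt1; lra.
have [g [rg Hg]] := main_ind Hall p0 cov c0 c1.
have [W [B [C Hq]]] := repr_rbm rg.
exists W, B, C.
have gpos := repr_pos rg.
set Sg := \sum_u g u in Hq Hg.
have Sg0 : 0 < Sg by apply: (lt_le_trans (gpos v0)); apply: le_sum_pt => u; exact: ltW.
rewrite /KL; apply: (@le_lt_trans _ _ (eps / 2)); last lra.
apply: (@le_trans _ _ (\sum_(x | 0 < p x) p x * (eps / 2))).
  apply: ler_sum => x px; rewrite Hq; apply: ler_wpM2l; first exact: p0.
  have y0 : 0 < p x / (g x / Sg) by apply: divr_gt0 => //; apply: divr_gt0.
  rewrite -(expRK (eps / 2)) ler_ln ?posrE ?expR_gt0 //.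
  rewrite invf_div mulrA ler_pdivrMr //.
  have := Hg x px; rewrite p1 mulr1 => H.
  have -> : p x * Sg = expR (eps / 2) * (c * p x * Sg).
    by rewrite /c mulrA mulrA expRN mulfV ?gt_eqF ?expR_gt0 // mul1r.
  by rewrite ler_pM2l ?expR_gt0.
rewrite -mulr_suml; have : \sum_(x | 0 < p x) p x <= 1.
  rewrite -p1 big_mkcond /=; apply: ler_sum => x _; case: ifP => // _.
move=> H; have := ler_wpM2r (ltW (divr_gt0 eps0 (@ltr0Sn R 1))) H; lra.
Qed.
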